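(* Let $\langle E,\rightarrow\rangle$ be a computation, $b_1,b_2$ regular predicates and $b=\mathrm{reg}(b_1\vee b_2)$. The graph $S_{\max}(E)$ has the same set of consistent cuts as the slice of $\langle E,\rightarrow\rangle$ with respect to $b$.
   Context: A computation is a directed graph $\langle E, \rightarrow\rangle$ whose vertices (events) are partitioned among processes $p_1,\dots,p_n$; events on each process are totally ordered, each process has an initial event and a final event, the path relation contains Lamport's happened-before relation, and all initial (resp. final) events lie in one strongly connected component. $\top$ is the set of final events and $\mathrm{succ}(e)$ the successor of $e$ on its process. A vertex subset $C$ is a consistent cut if for every edge $(u,v)$, $v\in C$ implies $u\in C$. A predicate (evaluated on non-trivial consistent cuts) is regular if whenever consistent cuts $C_1,C_2$ satisfy it, so do $C_1\cap C_2$ and $C_1\cup C_2$. $\mathrm{reg}(c)$ is the strongest regular predicate implied by $c$. The slice with respect to a predicate $c$ is a directed graph on $E$ whose consistent cuts include every consistent cut satisfying $c$ and which has the fewest consistent cuts among all such graphs. $F_c(e)[i]$ is the earliest event on $p_i$ reachable from $e$ in the slice with respect to $c$. $F_{\max}(e)[i]$ is whichever of $F_{b_1}(e)[i]$, $F_{b_2}(e)[i]$ occurs later on $p_i$. $S_{\max}(E)$ is the directed graph on $E$ with edges from each $e\notin\top$ to $\mathrm{succ}(e)$ and from each $e$ to $F_{\max}(e)[i]$ for every $i$. *)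

(* Defs.v *)
From mathcomp Require Import all_boot.
Set Implicit Arguments. Unset Strict Implicit. Unset Printing Implicit Defensive.

(* A computation: events E (finite), partitioned among n processes by [proc];
   on each process events are totally ordered by [pos] (injective on each
   process); [msg] is the message relation (for Lamport's happened-before);
   [edge] is the edge relation of the directed graph <E, ->. *)

Section Defs.
Variables (n : nat) (E : finType) (proc : E -> 'I_n) (pos : E -> nat).

Definition initial (e : E) : Prop := forall g, proc g = proc e -> pos e <= pos g.
Definition final (e : E) : Prop := forall g, proc g = proc e -> pos g <= pos e.

Definition is_succ (e f : E) : bool :=
  [&& proc f == proc e, pos e < pos f &
      [forall g, (proc g == proc e) ==> ~~ ((pos e < pos g) && (pos g < pos f))]].

Record computation (msg edge : rel E) : Prop := Computation {
  pos_inj : forall e f, proc e = proc f -> pos e = pos f -> e = f;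
  proc_nonempty : forall i : 'I_n, exists e, proc e = i;
  (* the path relation contains happened-before (generated by process order
     and messages; connect is transitive) *)
  proc_order_path : forall e f, proc e = proc f -> pos e < pos f -> connect edge e f;
  msg_path : forall e f, msg e f -> connect edge e f;
  initial_scc : forall e f, initial e -> initial f -> connect edge e f;
  final_scc : forall e f, final e -> final f -> connect edge e f
}.

Definition consistent (G : rel E) (C : {set E}) : bool :=
  [forall u, forall v, G u v ==> (v \in C) ==> (u \in C)].

Definition cuts (G : rel E) : {set {set E}} := [set C | consistent G C].

Definition nontrivial (C : {set E}) : Prop := C != set0 /\ C != setT.

Definition sat (edge : rel E) (c : {set E} -> Prop) (C : {set E}) : Prop :=
  consistent edge C /\ nontrivial C /\ c C.

Definition regular (edge : rel E) (c : {set E} -> Prop) : Prop :=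
  forall C1 C2, sat edge c C1 -> sat edge c C2 ->
    c (C1 :&: C2) /\ c (C1 :|: C2).

Definition implies (edge : rel E) (c d : {set E} -> Prop) : Prop :=
  forall C, sat edge c C -> d C.

Definition is_reg (edge : rel E) (c b : {set E} -> Prop) : Prop :=
  [/\ regular edge b, implies edge c b &
      forall b', regular edge b' -> implies edge c b' -> implies edge b b'].

Definition is_slice (edge : rel E) (c : {set E} -> Prop) (G : rel E) : Prop :=
  (forall C, sat edge c C -> consistent G C) /\
  (forall G' : rel E, (forall C, sat edge c C -> consistent G' C) ->
     #|cuts G| <= #|cuts G'|).

Definition earliest (G : rel E) (e v : E) : bool :=
  connect G e v &&
  [forall w, ((proc w == proc v) && connect G e w) ==> (pos v <= pos w)].

(* v = F_max(e)[proc v], with F_{b1}, F_{b2} computed in slices G1, G2 *)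
Definition Fmax_edge (G1 G2 : rel E) (e v : E) : bool :=
  [exists v1, exists v2,
     [&& earliest G1 e v1, earliest G2 e v2, proc v1 == proc v2 &
         v == (if pos v1 <= pos v2 then v2 else v1)]].

Definition Smax (G1 G2 : rel E) : rel E :=
  fun u v => is_succ u v || Fmax_edge G1 G2 u v.

End Defs.

(* Main.v *)
Require Import Defs.
From mathcomp Require Import all_boot.
Set Implicit Arguments. Unset Strict Implicit.

Lemma consP (E : finType) (G : rel E) (C : {set E}) :
  reflect (forall u v, G u v -> v \in C -> u \in C) (consistent G C).
Proof.
apply: (iffP forallP) => [H u v Guv vC | H u].
  by move: (H u) => /forallP /(_ v); rewrite Guv vC.
apply/forallP=> v; apply/implyP=> Guv; apply/implyP; exact: H.
Qed.

Lemma cons_connect (E : finType) (G : rel E) (C : {set E}) u v :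
  consistent G C -> connect G u v -> v \in C -> u \in C.
Proof.
move=> /consP H /connectP [p]; elim: p u => [|w p IH] u /=.
  by move=> _ ->.
case/andP=> Guw pw lastE vC; apply: H Guw _; exact: IH pw lastE vC.
Qed.

Lemma consI (E : finType) (G : rel E) (A B : {set E}) :
  consistent G A -> consistent G B -> consistent G (A :&: B).
Proof.
move=> /consP hA /consP hB; apply/consP => u v Guv; rewrite !inE.
by case/andP=> vA vB; rewrite (hA _ _ Guv vA) (hB _ _ Guv vB).
Qed.

Lemma consU (E : finType) (G : rel E) (A B : {set E}) :
  consistent G A -> consistent G B -> consistent G (A :|: B).
Proof.
move=> /consP hA /consP hB; apply/consP => u v Guv; rewrite !inE.
by case/orP=> [vA|vB]; rewrite ?(hA _ _ Guv vA) ?(hB _ _ Guv vB) ?orbT.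
Qed.

Lemma cons_or (E : finType) (G H : rel E) (C : {set E}) :
  consistent (fun u v => G u v || H u v) C = consistent G C && consistent H C.
Proof.
apply/consP/andP => [h | [/consP h1 /consP h2]].
  split; apply/consP => u v uv; apply: h; by rewrite uv ?orbT.
by move=> u v /orP [uv|uv]; [apply: h1 uv | apply: h2 uv].
Qed.

Lemma slice_sub (E : finType) (edge : rel E) c (Gk H : rel E) :
  is_slice edge c Gk -> (forall C, sat edge c C -> consistent H C) ->
  forall C, consistent Gk C -> consistent H C.
Proof.
move=> [hs hmin] hH C cC.
pose G' := fun u v => Gk u v || H u v.
have sub : cuts G' \subset cuts Gk.
  by apply/subsetP => D; rewrite !inE cons_or => /andP [].
have le2 : #|cuts Gk| <= #|cuts G'|.
  apply: hmin => D sD; rewrite cons_or (hs _ sD) (hH _ sD) //.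
have /subsetP h2 : cuts Gk \subset cuts G'.
  by rewrite -(subset_leqif_card sub); apply/eqP/anti_leq; rewrite le2 subset_leq_card.
by move: (h2 C); rewrite !inE cons_or cC /= => /(_ isT).
Qed.

Lemma cons_compl (E : finType) (G : rel E) u :
  consistent G [set x | ~~ connect G u x].
Proof.
apply/consP => w v Gwv; rewrite !inE; apply: contra => cw.
exact: connect_trans cw (connect1 Gwv).
Qed.

Lemma ex_earliest (n : nat) (E : finType) (proc : E -> 'I_n) (pos : E -> nat)
  (G : rel E) e x : connect G e x ->
  exists v, [/\ earliest proc pos G e v, proc v = proc x & pos v <= pos x].
Proof.
move=> cx.
pose P : pred E := fun w => (proc w == proc x) && connect G e w.
have Px : P x by rewrite /P eqxx cx.
case: (arg_minnP pos Px) => v /andP [/eqP pv cv] hmin.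
exists v; split => //; last by apply: hmin; rewrite /P eqxx cx.
rewrite /earliest cv /=; apply/forallP => w; apply/implyP => /andP [/eqP pw cw].
by apply: hmin; rewrite /P pw pv eqxx cw.
Qed.

Lemma dc_edge (n : nat) (E : finType) (proc : E -> 'I_n) (pos : E -> nat)
  (msg edge : rel E) (Hcomp : computation proc pos msg edge) (C : {set E}) x y :
  consistent edge C -> proc y = proc x -> pos y <= pos x -> x \in C -> y \in C.
Proof.
move=> cC pyx; rewrite leq_eqVlt => /orP [/eqP e|lt] xC.
  by rewrite (pos_inj Hcomp pyx e).
exact: cons_connect cC (proc_order_path Hcomp pyx lt) xC.
Qed.

Lemma dc_smax (n : nat) (E : finType) (proc : E -> 'I_n) (pos : E -> nat)
  (msg edge : rel E) (Hcomp : computation proc pos msg edge) (G1 G2 : rel E)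
  (C : {set E}) x :
  consistent (Smax proc pos G1 G2) C -> x \in C ->
  forall y, proc y = proc x -> pos y <= pos x -> y \in C.
Proof.
move=> /consP cC xC.
suff H : forall k y, proc y = proc x -> pos x - pos y <= k -> pos y <= pos x -> y \in C.
  by move=> y py le; apply: (H (pos x - pos y)).
elim=> [|k IH] y py.
  rewrite leqn0 subn_eq0 => h1 h2.
  by rewrite (pos_inj Hcomp py (anti_leq (introT andP (conj h2 h1)))).
move=> hk; rewrite leq_eqVlt => /orP [/eqP e|lt].
  by rewrite (pos_inj Hcomp py e).
pose P : pred E := fun z => (proc z == proc y) && (pos y < pos z).
have Px : P x by rewrite /P py eqxx lt.
case: (arg_minnP pos Px) => s /andP [/eqP ps lts] hmin.
have sxle : pos s <= pos x by apply: hmin.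
have sC : s \in C.
  apply: IH; first by rewrite ps.
    by rewrite leq_subLR; rewrite leq_subLR in hk; apply: leq_trans hk _; rewrite addnS -addSn leq_add2r.
  exact: sxle.
apply: (cC y s) sC; rewrite /Smax; apply/orP; left.
rewrite /is_succ ps eqxx lts /=; apply/forallP => g; apply/implyP => pg.
apply/negP => /andP [l1 l2].
have : pos s <= pos g by apply: hmin; rewrite /P pg l1.
by rewrite leqNgt l2.
Qed.

Lemma Lk_smax (n : nat) (E : finType) (proc : E -> 'I_n) (pos : E -> nat)
  (msg edge : rel E) (Hcomp : computation proc pos msg edge) (G1 G2 : rel E)
  (C : {set E}) :
  consistent edge C -> consistent G1 C \/ consistent G2 C ->
  consistent (Smax proc pos G1 G2) C.
Proof.
move=> ce hk; apply/consP => u w; rewrite /Smax => /orP [su|fm] wC.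
  case/and3P: su => /eqP pe lt _.
  exact: cons_connect ce (proc_order_path Hcomp (esym pe) lt) wC.
case/existsP: fm => v1 /existsP [v2 /and4P [e1 e2 /eqP p12 /eqP wE]].
have [v1C v2C] : v1 \in C /\ v2 \in C.
  move: wC; rewrite wE; case: leqP => h wC.
    by split => //; apply: (dc_edge Hcomp ce p12 h wC).
  by split => //; apply: (dc_edge Hcomp ce (esym p12) (ltnW h) wC).
case: hk => ck.
  by case/andP: e1 => c1 _; exact: cons_connect ck c1 v1C.
by case/andP: e2 => c2 _; exact: cons_connect ck c2 v2C.
Qed.

Unset Implicit Arguments.

Theorem theorem15 (n : nat) (E : finType) (proc : E -> 'I_n) (pos : E -> nat)
  (msg edge : rel E) (Hcomp : computation proc pos msg edge)
  (b1 b2 b : {set E} -> Prop)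
  (Hb1 : regular edge b1) (Hb2 : regular edge b2)
  (Hb : is_reg edge (fun C => b1 C \/ b2 C) b)
  (G1 G2 G : rel E)
  (HG1 : is_slice edge b1 G1) (HG2 : is_slice edge b2 G2)
  (HG : is_slice edge b G) :
  cuts (Smax proc pos G1 G2) = cuts G.
Proof.
have sat_b : forall C, sat edge b1 C \/ sat edge b2 C -> sat edge b C.
  case: Hb => _ imp _.
  move=> C [[c [nt h]]|[c [nt h]]]; (split => //; split => //; apply: imp; split => //; split => //).
    by left.
  by right.
have G1e := slice_sub HG1 (fun C (s : sat edge b1 C) => s.1).
have G2e := slice_sub HG2 (fun C (s : sat edge b2 C) => s.1).
have G1G := slice_sub HG1 (fun C s => HG.1 C (sat_b C (or_introl s))).
have G2G := slice_sub HG2 (fun C s => HG.1 C (sat_b C (or_intror s))).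
apply/setP => C; rewrite !inE; apply/idP/idP => cC.
  apply/consP => u v Guv vC; apply/negPn/negP => uC.
  pose D := [set x | ~~ connect G1 u x] :|: [set x | ~~ connect G2 u x].
  have cD : consistent G D by apply: consU; [apply: G1G | apply: G2G]; apply: cons_compl.
  have CD : v \in D.
    rewrite !inE -negb_and; apply/negP => /andP [c1 c2].
    have [v1 [e1 p1 l1]] := ex_earliest proc pos c1.
    have [v2 [e2 p2 l2]] := ex_earliest proc pos c2.
    pose w := if pos v1 <= pos v2 then v2 else v1.
    have Suw : Smax proc pos G1 G2 u w.
      rewrite /Smax; apply/orP; right; apply/existsP; exists v1; apply/existsP; exists v2.
      by rewrite e1 e2 p1 p2 /w !eqxx.
    have wC : w \in C.
      have pw : proc w = proc v by rewrite /w; case: ifP => _; [exact: p2 | exact: p1].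
      have lw : pos w <= pos v by rewrite /w; case: ifP => _; [exact: l2 | exact: l1].
      exact: (dc_smax Hcomp cC vC pw lw).
    by move/consP: cC => /(_ u w Suw wC); apply/negP.
  move/consP: cD => /(_ u v Guv CD).
  by rewrite !inE !connect0.
apply: (slice_sub HG) cC => D sD.
case: Hb => _ _ strong.
apply: (strong (fun C => consistent (Smax proc pos G1 G2) C)) sD.
  by move=> C1 C2 [_ [_ h1]] [_ [_ h2]]; split; [apply: consI | apply: consU].
move=> D' [ce [nt [h|h]]]; apply: (Lk_smax Hcomp ce).
  by left; apply: HG1.1.
by right; apply: HG2.1.
Qed.
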